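(* Fix $p\ge3$. For $(\beta,h)\in[0,\infty)\times\mathbb R$: (1) $\sup_{x\in[-1,1]}H_{\beta,h,p}(x)\ge0$, with equality if and only if $(\beta,h)\in[0,\tilde\beta_p]\times\{0\}$. (2) Every local maximizer of $H_{\beta,h,p}$ on $[-1,1]$ lies in $(-1,1)$. (3) $H_{\beta,h,p}$ has at most two local maximizers if $p=3$ and at most three local maximizers if $p\ge4$. Moreover, $H_{\beta,h,p}$ has three global maximizers if and only if $p\ge4$ is even, $h=0$ and $\beta=\tilde\beta_p$.
   Context: $I(x)=\frac12[(1+x)\log(1+x)+(1-x)\log(1-x)]$ on $[-1,1]$ and $H_{\beta,h,p}(x)=\beta x^p+hx-I(x)$. $\tilde\beta_p=\sup\{\beta\ge0:\sup_{x\in[-1,1]}H_{\beta,0,p}(x)=0\}$. A global maximizer is a point where $H_{\beta,h,p}$ attains its supremum over $[-1,1]$. *)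

(* Defs.v *)
From Stdlib Require Import Reals.
From Coquelicot Require Import Coquelicot.
Open Scope R_scope.

(* I(x) = 1/2[(1+x)log(1+x) + (1-x)log(1-x)], with the convention 0 log 0 = 0
   (automatic here: 0 * ln 0 = 0). *)
Definition Ifun (x : R) : R :=
  / 2 * ((1 + x) * ln (1 + x) + (1 - x) * ln (1 - x)).

Definition H (beta h : R) (p : nat) (x : R) : R :=
  beta * x ^ p + h * x - Ifun x.

Definition in11 (x : R) : Prop := -1 <= x <= 1.

Definition Hsup (beta h : R) (p : nat) : Rbar :=
  Lub_Rbar (fun y => exists x, in11 x /\ y = H beta h p x).

Definition beta_tilde (p : nat) : Rbar :=
  Lub_Rbar (fun b => 0 <= b /\ Hsup b 0 p = Finite 0).

Definition local_max (beta h : R) (p : nat) (x : R) : Prop :=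
  in11 x /\ exists eps, 0 < eps /\
    forall y, in11 y -> Rabs (y - x) < eps -> H beta h p y <= H beta h p x.

Definition global_max (beta h : R) (p : nat) (x : R) : Prop :=
  in11 x /\ forall y, in11 y -> H beta h p y <= H beta h p x.

(* Main.v *)
Require Import Defs.
From Stdlib Require Import Reals List Lra Lia.
From Coquelicot Require Import Coquelicot.
Open Scope R_scope.


Lemma list_max_ex (l : list R) : l <> nil -> exists m, In m l /\ forall x, In x l -> x <= m.
Proof.
  induction l as [|a l IH]; [congruence|]. intros _.
  destruct l as [|b l'].
  - exists a; split; [left; auto|]. intros x [->|[]]; lra.
  - destruct IH as [m [Hm Hmx]]; [discriminate|].
    destruct (Rle_dec a m).
    + exists m; split; [right; auto|]. intros x [->|Hx]; [lra| auto].
    + exists a; split; [left; auto|]. intros x [->|Hx]; [lra|]. specialize (Hmx x Hx); lra.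
Qed.

Lemma split_max (l : list R) n : NoDup l -> length l = S n ->
  exists m rest, In m l /\ (forall x, In x l -> x <= m) /\ NoDup rest /\ length rest = n /\
    (forall x, In x rest -> In x l /\ x < m).
Proof.
  intros Hnd Hlen.
  destruct (list_max_ex l) as [m [Hm Hmx]]; [intros ->; discriminate|].
  destruct (in_split _ _ Hm) as [l1 [l2 ->]].
  exists m, (l1 ++ l2). split; [auto|]. split; [auto|]. split.
  - eapply NoDup_remove_1; eauto.
  - split.
    + rewrite length_app in *; simpl in Hlen; lia.
    + intros x Hx. assert (In x (l1 ++ m :: l2)).
      { apply in_app_or in Hx; apply in_or_app; destruct Hx; [left|right;right]; auto. }
      split; auto. assert (x <> m).
      { intros ->. eapply NoDup_remove_2; eauto. }
      specialize (Hmx x H); lra.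
Qed.

Lemma rolle_count (g g' : R -> R) a b :
  (forall x, a < x < b -> derivable_pt_lim g x (g' x)) ->
  forall n l, NoDup l -> length l = S n -> (forall x, In x l -> a < x < b /\ g x = 0) ->
  exists L, NoDup L /\ length L = n /\ forall y, In y L -> g' y = 0 /\
     (exists x, In x l /\ x < y) /\ (exists x, In x l /\ y < x).
Proof.
  intros Hd n. induction n as [|n IH]; intros l Hnd Hlen Hz.
  - exists nil; split; [constructor|split; [reflexivity| intros y0 []]].
  - destruct (split_max l (S n) Hnd Hlen) as [m [rest [Hm [Hmx [Hnd' [Hlen' Hrest]]]]]].
    destruct (split_max rest n Hnd' Hlen') as [m2 [_ [Hm2 [Hm2x _]]]].
    destruct (IH rest Hnd' Hlen') as [L [HndL [HlenL HL]]].
    { intros x Hx; apply Hz; apply Hrest; auto. }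
    destruct (Hrest m2 Hm2) as [Hm2l Hm2m].
    destruct (Hz m Hm) as [Hmab Hgm]. destruct (Hz m2 Hm2l) as [Hm2ab Hgm2].
    destruct (MVT_cor2 g g' m2 m Hm2m) as [c [Hc1 Hc2]].
    { intros c Hc; apply Hd; lra. }
    assert (Hgc : g' c = 0).
    { rewrite Hgm, Hgm2 in Hc1. assert (E: g' c * (m - m2) = 0) by lra. apply Rmult_integral in E. destruct E; [auto| lra]. }
    exists (c :: L). split; [|split].
    + constructor; auto. intros HcL. destruct (HL c HcL) as [_ [_ [x [Hx Hcx]]]].
      specialize (Hm2x x Hx); lra.
    + simpl; lia.
    + intros y [<-|Hy].
      * split; auto. split; [exists m2; split; [auto| lra] | exists m; split; [auto|lra]].
      * destruct (HL y Hy) as [H1 [[x [Hx1 Hx2]] [x' [Hx'1 Hx'2]]]].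
        split; auto. split; [exists x | exists x']; split; auto; apply Hrest; auto.
Qed.

Definition atmost (P : R -> Prop) (n : nat) : Prop :=
  forall l, NoDup l -> (forall x, In x l -> P x) -> (length l <= n)%nat.

Lemma atmost_rolle (g g' : R -> R) a b c d n :
  (forall x, a < x < b -> derivable_pt_lim g x (g' x)) ->
  atmost (fun y => c < y < d /\ g' y = 0) n ->
  atmost (fun x => (a < x < b /\ c <= x <= d) /\ g x = 0) (S n).
Proof.
  intros Hd Ha l Hnd Hl. destruct l as [|x0 l0]; [simpl; lia|].
  destruct (rolle_count g g' a b Hd (length l0) (x0 :: l0) Hnd eq_refl) as [L [HndL [HlenL HL]]].
  { intros x Hx; destruct (Hl x Hx) as [[? ?] ?]; auto. }
  assert (length L <= n)%nat.
  { apply Ha; auto. intros y Hy. destruct (HL y Hy) as [H1 [[x [Hx1 Hx2]] [x' [Hx'1 Hx'2]]]].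
    destruct (Hl x Hx1) as [[_ ?] _]; destruct (Hl x' Hx'1) as [[_ ?] _]. split; [lra|auto]. }
  simpl; lia.
Qed.

Lemma atmost_uniq (P : R -> Prop) : (forall x y, P x -> P y -> x = y) -> atmost P 1.
Proof.
  intros Hu l Hnd Hl. destruct l as [|x [|y l]]; simpl; try lia.
  exfalso. inversion Hnd; subst. apply H1. left. apply Hu; apply Hl; simpl; auto.
Qed.

Lemma atmost_none (P : R -> Prop) : (forall x, ~ P x) -> atmost P 0.
Proof. intros Hn l _ Hl. destruct l as [|x l]; simpl; auto. exfalso; apply (Hn x), Hl; left; auto. Qed.

Lemma atmost_split (P : R -> Prop) n1 n2 :
  atmost (fun x => P x /\ x < 0) n1 -> atmost (fun x => P x /\ 0 < x) n2 ->
  (forall x, P x -> x <> 0) -> atmost P (n1 + n2).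
Proof.
  intros H1 H2 H0 l Hnd Hl.
  set (f := fun x => if Rlt_dec x 0 then true else false).
  rewrite <- (filter_length f l).
  assert (length (filter f l) <= n1)%nat.
  { apply H1. apply NoDup_filter; auto. intros x Hx. apply filter_In in Hx as [Hx Hf].
    unfold f in Hf. destruct (Rlt_dec x 0); [auto|discriminate]. }
  assert (length (filter (fun x => negb (f x)) l) <= n2)%nat.
  { apply H2. apply NoDup_filter; auto. intros x Hx. apply filter_In in Hx as [Hx Hf].
    unfold f in Hf. destruct (Rlt_dec x 0); [discriminate|]. split; auto.
    specialize (H0 x (Hl x Hx)). lra. }
  lia.
Qed.

Lemma atmost_mono (P Q : R -> Prop) n m : (forall x, P x -> Q x) -> (m <= n)%nat -> atmost Q m -> atmost P n.
Proof. intros HPQ Hmn HQ l Hnd Hl. specialize (HQ l Hnd (fun x Hx => HPQ x (Hl x Hx))). lia. Qed.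

Lemma atmost_noplateau (g : R -> R) a b n :
  atmost (fun x => a < x < b /\ g x = 0) n ->
  forall u v, a <= u -> u < v -> v <= b -> exists z, u < z < v /\ g z <> 0.
Proof.
  intros Ha u v Hau Huv Hvb.
  destruct (Classical_Prop.classic (exists z, u < z < v /\ g z <> 0)) as [?|Hn]; auto.
  exfalso.
  set (pt := fun i : nat => u + (v - u) * INR (S i) / INR (n + 2)).
  assert (Hpos : 0 < INR (n+2)) by (apply lt_0_INR; lia).
  assert (Hin : forall i, (i < n + 1)%nat -> u < pt i < v).
  { intros i Hi. unfold pt. assert (0 < INR (S i)) by (apply lt_0_INR; lia).
    assert (INR (S i) < INR (n + 2)) by (apply lt_INR; lia).
    split.
    - assert (0 < (v - u) * INR (S i) / INR (n + 2)); [|lra].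
      unfold Rdiv; apply Rmult_lt_0_compat; [apply Rmult_lt_0_compat; lra| apply Rinv_0_lt_compat; lra].
    - assert ((v - u) * INR (S i) / INR (n + 2) < v - u); [|lra].
      apply (Rmult_lt_reg_r (INR (n+2))); auto. unfold Rdiv. rewrite Rmult_assoc, Rinv_l by lra.
      rewrite Rmult_1_r. apply Rmult_lt_compat_l; lra. }
  assert (Hinj : forall i j, pt i = pt j -> i = j).
  { intros i j Hij. unfold pt in Hij.
    assert (INR (S i) = INR (S j)).
    { apply (Rmult_eq_reg_l ((v - u) / INR (n+2))).
      - unfold Rdiv in *. lra.
      - unfold Rdiv. intro H0. apply Rmult_integral in H0. destruct H0 as [H0|H0]; [lra|].
        apply Rinv_neq_0_compat in H0; lra. }
    apply INR_eq in H. lia. }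
  assert (length (map pt (seq 0 (n+1))) <= n)%nat.
  { apply Ha.
    - apply NoDup_map_NoDup_ForallPairs; [intros i j _ _; apply Hinj| apply seq_NoDup].
    - intros x Hx. apply in_map_iff in Hx as [i [<- Hi]]. apply in_seq in Hi.
      specialize (Hin i ltac:(lia)). split; [lra|].
      destruct (Req_dec (g (pt i)) 0); auto. exfalso; apply Hn; exists (pt i); split; auto. }
  rewrite length_map, length_seq in H. lia.
Qed.

Lemma lmax_deriv0 (g : R -> R) c l a b : a < c < b -> derivable_pt_lim g c l ->
  (forall x, a < x < b -> g x <= g c) -> l = 0.
Proof.
  intros Hc Hd Hm.
  pose proof (deriv_maximum g a b c (exist _ l Hd) (proj1 Hc) (proj2 Hc) (fun x h1 h2 => Hm x (conj h1 h2))) as E.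
  exact E.
Qed.

Lemma lmin_deriv0 (g : R -> R) c l a b : a < c < b -> derivable_pt_lim g c l ->
  (forall x, a < x < b -> g c <= g x) -> l = 0.
Proof.
  intros Hc Hd Hm.
  pose proof (deriv_minimum g a b c (exist _ l Hd) (proj1 Hc) (proj2 Hc) (fun x h1 h2 => Hm x (conj h1 h2))) as E.
  exact E.
Qed.


Definition lmaxo (G : R -> R) a b x := a < x < b /\
  exists eps, 0 < eps /\ forall y, a < y < b -> Rabs (y - x) < eps -> G y <= G x.

Lemma lmax_zero (G g : R -> R) a b x :
  (forall y, a < y < b -> derivable_pt_lim G y (g y)) -> lmaxo G a b x -> g x = 0.
Proof.
  intros Hd [Hx [eps [He Hm]]].
  apply (lmax_deriv0 G x (g x) (Rmax a (x - eps)) (Rmin b (x + eps))).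
  - split; [apply Rmax_lub_lt | apply Rmin_glb_lt]; lra.
  - apply Hd; auto.
  - intros y [H1 H2]. pose proof (Rmax_l a (x - eps)). pose proof (Rmax_r a (x - eps)).
    pose proof (Rmin_l b (x + eps)). pose proof (Rmin_r b (x + eps)).
    apply Hm; [lra|]. apply Rabs_def1; lra.
Qed.

Lemma lmax_count (G g : R -> R) a b :
  (forall y, a < y < b -> derivable_pt_lim G y (g y)) ->
  (forall u v, a <= u -> u < v -> v <= b -> exists z, u < z < v /\ g z <> 0) ->
  forall n l, NoDup l -> length l = S n -> (forall x, In x l -> lmaxo G a b x) ->
  exists L, NoDup L /\ length L = (2 * n + 1)%nat /\ forall y, In y L -> g y = 0 /\
     (exists x, In x l /\ x <= y) /\ (exists x, In x l /\ y <= x).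
Proof.
  intros Hd Hnp n. induction n as [|n IH]; intros l Hnd Hlen Hl.
  - destruct l as [|x [|]]; simpl in Hlen; try discriminate.
    exists (x :: nil). split; [constructor; [intros []|constructor]|]. split; [reflexivity|].
    intros y [Hy|[]]; subst y. split; [apply (lmax_zero G g a b x Hd); apply Hl; left; auto|].
    split; exists x; (split; [left; reflexivity | lra]).
  - destruct (split_max l (S n) Hnd Hlen) as [m [rest [Hm [Hmx [Hnd' [Hlen' Hrest]]]]]].
    destruct (split_max rest n Hnd' Hlen') as [m2 [_ [Hm2 [Hm2x _]]]].
    destruct (IH rest Hnd' Hlen') as [L [HndL [HlenL HL]]].
    { intros x Hx; apply Hl; apply Hrest; auto. }
    destruct (Hrest m2 Hm2) as [Hm2l Hm2m].
    pose proof (Hl m Hm) as Hlm. pose proof (Hl m2 Hm2l) as Hlm2.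
    destruct Hlm as [Hmab [eps [He Heps]]]. destruct Hlm2 as [Hm2ab [eps2 [He2 Heps2]]].
    destruct (continuity_ab_min G m2 m) as [y0 [Hy0min Hy0]]; [lra| |].
    { intros c Hc. apply derivable_continuous_pt. exists (g c). apply Hd. lra. }
    assert (Hy0i : m2 < y0 < m).
    { destruct (Rle_lt_or_eq_dec m2 y0 (proj1 Hy0)) as [H1|H1];
      destruct (Rle_lt_or_eq_dec y0 m (proj2 Hy0)) as [H2|H2]; try lra; exfalso.
      -
        subst y0. destruct (Hnp (Rmax m2 (m - eps)) m) as [z [Hz Hgz]].
        + pose proof (Rmax_l m2 (m - eps)); lra.
        + apply Rmax_lub_lt; lra.
        + lra.
        + apply Hgz. pose proof (Rmax_l m2 (m - eps)). pose proof (Rmax_r m2 (m - eps)).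
          apply (lmax_deriv0 G z (g z) (Rmax m2 (m - eps)) m); [lra| apply Hd; lra|].
          intros w Hw. apply Rle_trans with (G m).
          * apply Heps; [lra|]. apply Rabs_def1; lra.
          * apply Hy0min; lra.
      - subst y0. destruct (Hnp m2 (Rmin m (m2 + eps2))) as [z [Hz Hgz]].
        + lra.
        + apply Rmin_glb_lt; lra.
        + pose proof (Rmin_l m (m2 + eps2)); lra.
        + apply Hgz. pose proof (Rmin_l m (m2 + eps2)). pose proof (Rmin_r m (m2 + eps2)).
          apply (lmax_deriv0 G z (g z) m2 (Rmin m (m2 + eps2))); [lra| apply Hd; lra|].
          intros w Hw. apply Rle_trans with (G m2).
          * apply Heps2; [lra|]. apply Rabs_def1; lra.
          * apply Hy0min; lra. }
    assert (Hgy0 : g y0 = 0).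
    { apply (lmin_deriv0 G y0 (g y0) m2 m); auto. apply Hd; lra.
      intros w Hw; apply Hy0min; lra. }
    assert (Hgm : g m = 0).
    { apply (lmax_zero G g a b m Hd). apply Hl; auto. }
    assert (HLle : forall y, In y L -> y <= m2).
    { intros y Hy. destruct (HL y Hy) as [_ [_ [x [Hx1 Hx2]]]]. specialize (Hm2x x Hx1); lra. }
    exists (m :: y0 :: L). split; [|split].
    + constructor; [|constructor].
      * intros [H1|H1]; [lra|]. specialize (HLle m H1); lra.
      * intros H1. specialize (HLle y0 H1); lra.
      * auto.
    + simpl. lia.
    + intros y [Hy|[Hy|Hy]]; [subst y|subst y|].
      * split; auto. split; exists m; (split; [auto|lra]).
      * split; auto. split; [exists m2; split; [auto|lra] | exists m; split; [auto|lra]].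
      * destruct (HL y Hy) as [H1 [[x [Hx1 Hx2]] [x' [Hx'1 Hx'2]]]].
        split; auto. split; [exists x | exists x']; split; auto; apply Hrest; auto.
Qed.


Definition fH b h q x := (INR q + 3) * b * x^(q+2) + h - /2*(ln(1+x) - ln(1-x)).
Definition fH' b q x := (INR q + 3)*(INR q + 2)*b*x^(q+1) - /2*(/(1+x) + /(1-x)).
Definition kf b q x := (INR q+3)*(INR q+2)*b*x^(q+1)*(1-x^2) - 1.
Definition kf' b q x := (INR q+3)*(INR q+2)*b*x^q*((INR q+1) - (INR q+3)*x^2).

Lemma INR_S' n : INR (S n) = INR n + 1.
Proof. apply S_INR. Qed.

Lemma dH b h q x : -1 < x < 1 -> derivable_pt_lim (H b h (S (S (S q)))) x (fH b h q x).
Proof.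
  intros Hx. apply is_derive_Reals. unfold Defs.H, Ifun, fH. auto_derive.
  - repeat split; lra.
  - change (match q with 0%nat => 1 | S _ => INR q + 1 end) with (INR (S q)).
    rewrite INR_S'. replace (q + 2)%nat with (S (S q)) by lia. simpl.
    replace (1 + - x) with (1 - x) by ring. field. lra.
Qed.

Lemma dfH b h q x : -1 < x < 1 -> derivable_pt_lim (fH b h q) x (fH' b q x).
Proof.
  intros Hx. apply is_derive_Reals. unfold fH, fH'. auto_derive.
  - repeat split; lra.
  - replace (q + 2)%nat with (S (S q)) by lia. replace (q + 1)%nat with (S q) by lia. simpl.
    change (match q with 0%nat => 1 | S _ => INR q + 1 end) with (INR (S q)). rewrite ?INR_S'. field. lra.
Qed.

Lemma dkf b q x : derivable_pt_lim (kf b q) x (kf' b q x).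
Proof.
  apply is_derive_Reals. unfold kf, kf'. auto_derive; auto.
  replace (q + 1)%nat with (S q) by lia. simpl.
  change (match q with 0%nat => 1 | S _ => INR q + 1 end) with (INR (S q)). rewrite INR_S'. ring.
Qed.

Lemma fH'_kf b q x : -1 < x < 1 -> fH' b q x = kf b q x / (1 - x^2).
Proof. intros Hx. unfold fH', kf. field. split; nra. Qed.

Lemma fH'_zero b q x : -1 < x < 1 -> fH' b q x = 0 -> kf b q x = 0.
Proof.
  intros Hx H0. rewrite fH'_kf in H0 by auto.
  assert (0 < 1 - x^2) by nra.
  unfold Rdiv in H0. apply Rmult_integral in H0. destruct H0 as [H0|H0]; auto.
  apply Rinv_neq_0_compat in H0; [contradiction| lra].
Qed.

Lemma kf_b0 q x : kf 0 q x = -1.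
Proof. unfold kf. ring. Qed.

Lemma Cpos q b : 0 < b -> 0 < (INR q + 3) * (INR q + 2) * b.
Proof. intros. pose proof (pos_INR q). apply Rmult_lt_0_compat; [|auto]. nra. Qed.

Lemma kf'_zero b q y : 0 < b -> y <> 0 -> kf' b q y = 0 -> (INR q + 1) = (INR q + 3) * y^2.
Proof.
  intros Hb Hy H0. unfold kf' in H0. pose proof (Cpos q b Hb).
  pose proof (pow_nonzero y q Hy).
  apply Rmult_integral in H0. destruct H0 as [H0|H0]; [|lra].
  apply Rmult_integral in H0. destruct H0 as [H0|H0]; lra.
Qed.

Lemma kpos b q : 0 <= b -> atmost (fun x => 0 < x < 1 /\ kf b q x = 0) 2.
Proof.
  intros Hb. destruct (Req_dec b 0) as [->|Hb0].
  - apply (atmost_mono _ (fun _ => False) 2 0); [| lia | apply atmost_none; auto].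
    intros x [_ Hk]. rewrite kf_b0 in Hk. lra.
  - assert (Hb' : 0 < b) by lra.
    apply (atmost_mono _ (fun x => (0 < x < 1 /\ 0 <= x <= 1) /\ kf b q x = 0) 2 2); [| lia |].
    + intros x [Hx Hk]; split; [split; lra| auto].
    + apply (atmost_rolle (kf b q) (kf' b q) 0 1 0 1 1).
      * intros x _; apply dkf.
      * apply atmost_uniq. intros x y [Hx Hkx] [Hy Hky].
        apply kf'_zero in Hkx; try lra. apply kf'_zero in Hky; try lra.
        pose proof (pos_INR q). nra.
Qed.

Lemma kneg b q : 0 <= b -> atmost (fun x => -1 < x < 0 /\ kf b q x = 0) 2.
Proof.
  intros Hb. destruct (Req_dec b 0) as [->|Hb0].
  - apply (atmost_mono _ (fun _ => False) 2 0); [| lia | apply atmost_none; auto].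
    intros x [_ Hk]. rewrite kf_b0 in Hk. lra.
  - assert (Hb' : 0 < b) by lra.
    apply (atmost_mono _ (fun x => (-1 < x < 0 /\ -1 <= x <= 0) /\ kf b q x = 0) 2 2); [| lia |].
    + intros x [Hx Hk]; split; [split; lra| auto].
    + apply (atmost_rolle (kf b q) (kf' b q) (-1) 0 (-1) 0 1).
      * intros x _; apply dkf.
      * apply atmost_uniq. intros x y [Hx Hkx] [Hy Hky].
        apply kf'_zero in Hkx; try lra. apply kf'_zero in Hky; try lra.
        pose proof (pos_INR q). nra.
Qed.

Lemma pow_odd_neg x n : x < 0 -> Nat.Odd n -> x ^ n < 0.
Proof.
  intros Hx [r ->]. rewrite pow_add, pow_mult. simpl.
  assert (0 < (x * (x * 1)) ^ r) by (apply pow_lt; nra). nra.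
Qed.

Lemma pow_even_abs x n : Nat.Even n -> x ^ n = (Rabs x) ^ n.
Proof.
  intros [r ->]. rewrite !pow_mult. f_equal. simpl. rewrite !Rmult_1_r.
  rewrite <- Rabs_mult. rewrite Rabs_right; [auto|]. apply Rle_ge. nra.
Qed.

Lemma kf_neg_odd b q x : 0 <= b -> Nat.Even q -> -1 < x < 0 -> kf b q x < 0.
Proof.
  intros Hb Hq Hx. unfold kf.
  assert (x ^ (q + 1) < 0).
  { apply pow_odd_neg; [lra|]. destruct Hq as [r ->]. exists r. lia. }
  pose proof (pos_INR q).
  assert (0 <= (INR q + 3) * (INR q + 2) * b) by (apply Rmult_le_pos; nra).
  assert (0 < 1 - x^2) by nra.
  assert ((INR q + 3) * (INR q + 2) * b * x ^ (q + 1) <= 0) by nra. nra.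
Qed.

Lemma kf0 b q : kf b q 0 = -1.
Proof. unfold kf. replace (q+1)%nat with (S q) by lia. simpl. ring. Qed.

Lemma kall b q : 0 <= b -> atmost (fun x => -1 < x < 1 /\ kf b q x = 0) (if Nat.even q then 2 else 4).
Proof.
  intros Hb.
  replace (if Nat.even q then 2 else 4)%nat with ((if Nat.even q then 0 else 2) + 2)%nat
    by (destruct (Nat.even q); reflexivity).
  apply atmost_split.
  - destruct (Nat.even q) eqn:E.
    + apply atmost_none. intros x [[Hx Hk] Hx0].
      apply Nat.even_spec in E. pose proof (kf_neg_odd b q x Hb E ltac:(lra)). lra.
    + apply (atmost_mono _ (fun x => -1 < x < 0 /\ kf b q x = 0) 2 2); [| lia | apply kneg; auto].
      intros x [[Hx Hk] Hx0]; split; [lra|auto].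
  - apply (atmost_mono _ (fun x => 0 < x < 1 /\ kf b q x = 0) 2 2); [| lia | apply kpos; auto].
    intros x [[Hx Hk] Hx0]; split; [lra|auto].
  - intros x [_ Hk] ->. rewrite kf0 in Hk. lra.
Qed.

Lemma fall b h q : 0 <= b ->
  atmost (fun x => -1 < x < 1 /\ fH b h q x = 0) (if Nat.even q then 3 else 5).
Proof.
  intros Hb.
  apply (atmost_mono _ (fun x => (-1 < x < 1 /\ -1 <= x <= 1) /\ fH b h q x = 0) _ (S (if Nat.even q then 2 else 4))).
  - intros x [Hx Hf]; split; [split; lra|auto].
  - destruct (Nat.even q); lia.
  - apply (atmost_rolle (fH b h q) (fH' b q) (-1) 1 (-1) 1).
    + intros x Hx; apply dfH; auto.
    + apply (atmost_mono _ (fun x => -1 < x < 1 /\ kf b q x = 0) (if Nat.even q then 2 else 4) (if Nat.even q then 2 else 4)); [| lia | apply kall; auto].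
      intros x [Hx Hf]; split; auto. apply fH'_zero; auto.
Qed.

Lemma fpos b h q : 0 <= b ->
  atmost (fun x => (-1 < x < 1 /\ 0 <= x <= 1) /\ fH b h q x = 0) 3.
Proof.
  intros Hb. apply (atmost_rolle (fH b h q) (fH' b q) (-1) 1 0 1 2).
  - intros x Hx; apply dfH; auto.
  - apply (atmost_mono _ (fun x => 0 < x < 1 /\ kf b q x = 0) 2 2); [| lia | apply kpos; auto].
    intros x [Hx Hf]; split; auto. apply fH'_zero; auto. lra.
Qed.

Lemma fneg b h q : 0 <= b ->
  atmost (fun x => (-1 < x < 1 /\ -1 <= x <= 0) /\ fH b h q x = 0) 3.
Proof.
  intros Hb. apply (atmost_rolle (fH b h q) (fH' b q) (-1) 1 (-1) 0 2).
  - intros x Hx; apply dfH; auto.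
  - apply (atmost_mono _ (fun x => -1 < x < 0 /\ kf b q x = 0) 2 2); [| lia | apply kneg; auto].
    intros x [Hx Hf]; split; auto. apply fH'_zero; auto. lra.
Qed.


Lemma ln_le_sub1 y : 0 < y -> ln y <= y - 1.
Proof.
  intros Hy. rewrite <- (ln_exp (y - 1)). apply ln_le; auto.
  pose proof (exp_ineq1_le (y - 1)). lra.
Qed.

Lemma ln_nonpos x : x <= 0 -> ln x = 0.
Proof. intros Hx. unfold ln. destruct (Rlt_dec 0 x) as [r|r]; [exfalso; lra| reflexivity]. Qed.

Lemma Ifun_even x : Ifun (- x) = Ifun x.
Proof. unfold Ifun. replace (1 - - x) with (1 + x) by ring. replace (1 + - x) with (1 - x) by ring. ring. Qed.

Lemma Ifun_abs x : Ifun (Rabs x) = Ifun x.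
Proof. unfold Rabs. destruct (Rcase_abs x); [apply Ifun_even|auto]. Qed.

Lemma Ifun0 : Ifun 0 = 0.
Proof. unfold Ifun. replace (1 + 0) with 1 by ring. replace (1 - 0) with 1 by ring. rewrite ln_1. ring. Qed.

Lemma Ifun1 : Ifun 1 = ln 2.
Proof. unfold Ifun. replace (1 + 1) with 2 by ring. replace (1 - 1) with 0 by ring. field. Qed.

Lemma Hat0 b h p : (1 <= p)%nat -> H b h p 0 = 0.
Proof. intros Hp. unfold H. rewrite Ifun0. destruct p; [lia|]. simpl. ring. Qed.

Lemma Ifun_le x : -1 < x < 1 -> Ifun x <= x ^ 2.
Proof.
  intros Hx. unfold Ifun.
  pose proof (ln_le_sub1 (1 + x) ltac:(lra)). pose proof (ln_le_sub1 (1 - x) ltac:(lra)).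
  assert ((1 + x) * ln (1 + x) <= (1 + x) * x) by (apply Rmult_le_compat_l; lra).
  assert ((1 - x) * ln (1 - x) <= (1 - x) * (- x)) by (apply Rmult_le_compat_l; lra).
  nra.
Qed.

Definition g1 x := /2 * (ln (1 + x) - ln (1 - x)) - x.

Lemma dIfun x : -1 < x < 1 -> derivable_pt_lim Ifun x (/2 * (ln (1 + x) - ln (1 - x))).
Proof.
  intros Hx. apply is_derive_Reals. unfold Ifun. auto_derive.
  - repeat split; lra.
  - replace (1 + - x) with (1 - x) by ring. field. lra.
Qed.

Lemma g1_nonneg x : 0 <= x < 1 -> 0 <= g1 x.
Proof.
  intros Hx. destruct (Req_dec x 0) as [->|Hx0].
  - unfold g1. replace (1 + 0) with 1 by ring. replace (1 - 0) with 1 by ring. lra.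
  - destruct (MVT_cor2 g1 (fun c => /2 * (/(1 + c) + /(1 - c)) - 1) 0 x) as [c [Hc1 Hc2]]; [lra| |].
    + intros c Hc. apply is_derive_Reals. unfold g1. auto_derive.
      * repeat split; lra.
      * field. lra.
    + assert (E : g1 0 = 0).
      { unfold g1. replace (1 + 0) with 1 by ring. replace (1 - 0) with 1 by ring. lra. }
      assert (0 <= /2 * (/(1 + c) + /(1 - c)) - 1).
      { replace (/2 * (/(1 + c) + /(1 - c)) - 1) with (c ^ 2 / (1 - c ^ 2)) by (field; repeat split; nra).
        apply Rmult_le_pos; [nra|]. apply Rlt_le, Rinv_0_lt_compat. nra. }
      rewrite E in Hc1. cbv beta in Hc1. nra.
Qed.

Lemma Ifun_ge_pos x : 0 <= x < 1 -> x ^ 2 / 2 <= Ifun x.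
Proof.
  intros Hx. destruct (Req_dec x 0) as [->|Hx0].
  - rewrite Ifun0. lra.
  - destruct (MVT_cor2 (fun y => Ifun y - y ^ 2 / 2) g1 0 x) as [c [Hc1 Hc2]]; [lra| |].
    + intros c Hc. unfold g1.
      replace (/ 2 * (ln (1 + c) - ln (1 - c)) - c) with (/ 2 * (ln (1 + c) - ln (1 - c)) - (INR 2 * c ^ 1) / 2)
        by (simpl; field).
      apply derivable_pt_lim_minus; [apply dIfun; lra|].
      unfold Rdiv. apply derivable_pt_lim_scal_right. apply derivable_pt_lim_pow.
    + rewrite Ifun0 in Hc1. pose proof (g1_nonneg c ltac:(lra)). nra.
Qed.

Lemma Ifun_ge x : -1 < x < 1 -> x ^ 2 / 2 <= Ifun x.
Proof.
  intros Hx. destruct (Rle_dec 0 x).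
  - apply Ifun_ge_pos; lra.
  - rewrite <- Ifun_even. replace (x ^ 2) with ((- x) ^ 2) by ring. apply Ifun_ge_pos; lra.
Qed.

Lemma ln2_pos : 0 < ln 2.
Proof. pose proof ln_lt_2. lra. Qed.

Lemma ln2_lt1 : ln 2 < 1.
Proof.
  rewrite <- (ln_exp 1). apply ln_increasing; [lra|].
  pose proof (exp_ineq1 1 ltac:(lra)). lra.
Qed.

Lemma Ifun_pos x : -1 <= x <= 1 -> x <> 0 -> 0 < Ifun x.
Proof.
  intros Hx Hx0.
  destruct (Req_dec x 1) as [->|H1]; [rewrite Ifun1; apply ln2_pos|].
  destruct (Req_dec x (-1)) as [->|H2]; [replace (Ifun (-1)) with (Ifun 1) by (rewrite <- Ifun_even; f_equal; ring); rewrite Ifun1; apply ln2_pos|].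
  pose proof (Ifun_ge x ltac:(lra)). assert (0 < x ^ 2) by (apply pow2_gt_0; auto). lra.
Qed.

Lemma Ifun_nonneg x : -1 <= x <= 1 -> 0 <= Ifun x.
Proof.
  intros Hx. destruct (Req_dec x 0) as [->|H]; [rewrite Ifun0; lra|].
  apply Rlt_le, Ifun_pos; auto.
Qed.


Definition phi (t : R) := t * ln t.


Lemma phi_small x : 0 < x <= 1 -> Rabs (phi x) <= 2 * sqrt x.
Proof.
  intros Hx. set (s := sqrt x).
  assert (Hs : 0 < s) by (apply sqrt_lt_R0; lra).
  assert (Hss : s * s = x) by (apply sqrt_sqrt; lra).
  assert (Hs1 : s <= 1).
  { destruct (Rle_dec s 1); auto. nra. }
  assert (Hlnx : ln x = 2 * ln s).
  { rewrite <- Hss. rewrite ln_mult by lra. ring. }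
  assert (Hln : ln (/ s) <= / s - 1) by (apply ln_le_sub1; apply Rinv_0_lt_compat; lra).
  rewrite ln_Rinv in Hln by lra.
  assert (Hlnneg : ln s <= 0).
  { destruct (Req_dec s 1) as [->|Hne]; [rewrite ln_1; lra|].
    left. rewrite <- ln_1. apply ln_increasing; lra. }
  unfold phi. rewrite Rabs_left1.
  - rewrite Hlnx. rewrite <- Hss.
    assert (- ln s <= / s) by lra.
    assert (s * (- ln s) <= s * / s) by (apply Rmult_le_compat_l; lra).
    rewrite Rinv_r in H0 by lra. nra.
  - rewrite Hlnx. nra.
Qed.

Lemma phi_cont0 : continuity_pt phi 0.
Proof.
  unfold continuity_pt, continue_in, limit1_in, limit_in. intros eps Heps.
  exists (Rmin 1 (eps * eps / 4)). split.
  { apply Rmin_pos; nra. }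
  intros x [_ Hx]. unfold R_dist in *. simpl in *. unfold R_dist in *.
  replace (phi 0) with 0 by (unfold phi; ring).
  replace (x - 0) with x in Hx by ring. replace (phi x - 0) with (phi x) by ring.
  pose proof (Rmin_l 1 (eps * eps / 4)). pose proof (Rmin_r 1 (eps * eps / 4)).
  destruct (Rle_dec x 0) as [Hx0|Hx0].
  - unfold phi. rewrite ln_nonpos by auto. rewrite Rmult_0_r, Rabs_R0. lra.
  - assert (Hxp : 0 < x <= 1) by (rewrite Rabs_right in Hx; lra).
    pose proof (phi_small x Hxp).
    rewrite Rabs_right in Hx by lra.
    assert (sqrt x < eps / 2).
    { assert (Hs : 0 <= sqrt x) by apply sqrt_pos.
      assert (Hss : sqrt x * sqrt x = x) by (apply sqrt_sqrt; lra). nra. }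
    lra.
Qed.

Lemma Ifun_cont x : 0 < x <= 1 -> continuity_pt Ifun x.
Proof.
  intros Hx. destruct (Req_dec x 1) as [->|Hx1].
  - apply (continuity_pt_ext (fun y => / 2 * ((1 + y) * ln (1 + y) + phi (1 - y)))).
    { intros y. unfold Ifun, phi. reflexivity. }
    apply continuity_pt_mult; [apply continuity_pt_const; intros a b; auto|].
    apply continuity_pt_plus.
    + apply continuity_pt_mult.
      * apply continuity_pt_plus; [apply continuity_pt_const; intros a b; auto| apply derivable_continuous_pt, derivable_pt_id].
      * apply (continuity_pt_comp (fun y => 1 + y) ln).
        { apply continuity_pt_plus; [apply continuity_pt_const; intros a b; auto| apply derivable_continuous_pt, derivable_pt_id]. }
        apply derivable_continuous_pt. exists (/ (1 + 1)). apply derivable_pt_lim_ln. lra.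
    + apply (continuity_pt_comp (fun y => 1 - y) phi).
      { apply continuity_pt_minus; [apply continuity_pt_const; intros a b; auto| apply derivable_continuous_pt, derivable_pt_id]. }
      replace (1 - 1) with 0 by ring. apply phi_cont0.
  - apply derivable_continuous_pt. eexists. apply dIfun. lra.
Qed.

Lemma pow_le1 x n : 0 <= x <= 1 -> x ^ n <= 1.
Proof. intros Hx. rewrite <- (pow1 n). apply pow_incr; lra. Qed.

Lemma pow_le_cube x p : (3 <= p)%nat -> 0 <= x <= 1 -> x ^ p <= x ^ 3.
Proof.
  intros Hp Hx. replace p with (3 + (p - 3))%nat by lia. rewrite pow_add.
  pose proof (pow_le1 x (p - 3) Hx). assert (0 <= x ^ 3) by (apply pow_le; lra).
  assert (0 <= x ^ (p - 3)) by (apply pow_le; lra). nra.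
Qed.

Definition bfun p x := Ifun x / x ^ p.

Lemma c_exists p : (3 <= p)%nat -> exists c m, 1/2 <= m <= 1 /\ Ifun m = c * m ^ p /\
  (forall x, 0 < x <= 1 -> c * x ^ p <= Ifun x) /\ 0 < c.
Proof.
  intros Hp.
  destruct (continuity_ab_min (bfun p) (1/2) 1) as [m [Hmin Hm]]; [lra| |].
  { intros x Hx. apply (continuity_pt_ext (fun y => (Ifun / (fun y => y ^ p))%F y)).
    { intros y; reflexivity. }
    apply continuity_pt_div.
    - apply Ifun_cont; lra.
    - apply derivable_continuous_pt, derivable_pt_pow.
    - apply pow_nonzero; lra. }
  exists (bfun p m), m.
  assert (Hmp : 0 < m ^ p) by (apply pow_lt; lra).
  assert (Hc : 0 < bfun p m).
  { unfold bfun. apply Rdiv_lt_0_compat; auto. apply Ifun_pos; lra. }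
  split; [auto|]. split; [unfold bfun; field; lra|]. split; [|auto].
  intros x Hx. assert (Hxp : 0 < x ^ p) by (apply pow_lt; lra).
  destruct (Rle_dec (1/2) x).
  - pose proof (Hmin x ltac:(lra)). unfold bfun at 2 in H.
    apply (Rmult_le_compat_r (x ^ p)) in H; [|lra].
    replace (Ifun x / x ^ p * x ^ p) with (Ifun x) in H by (field; lra). auto.
  - assert (Hc1 : bfun p m <= 1).
    { pose proof (Hmin 1 ltac:(lra)). unfold bfun at 2 in H. rewrite Ifun1, pow1 in H.
      pose proof ln2_lt1. lra. }
    pose proof (pow_le_cube x p Hp ltac:(lra)).
    pose proof (Ifun_ge x ltac:(lra)).
    assert (x ^ 3 <= x ^ 2 / 2) by (simpl; nra).
    nra.
Qed.


Lemma Hsup_ge_val b h p x : in11 x -> Rbar_le (Finite (H b h p x)) (Hsup b h p).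
Proof.
  intros Hx. unfold Hsup. destruct (Lub_Rbar_correct (fun y => exists x, in11 x /\ y = H b h p x)) as [Hub _].
  apply Hub. exists x; auto.
Qed.

Lemma Hsup_eq b h p M x0 : (forall x, in11 x -> H b h p x <= M) -> in11 x0 -> H b h p x0 = M ->
  Hsup b h p = Finite M.
Proof.
  intros Hle Hx0 HM. unfold Hsup. apply is_lub_Rbar_unique. split.
  - intros y [x [Hx ->]]. simpl. auto.
  - intros l Hl. rewrite <- HM. apply Hl. exists x0; auto.
Qed.

Lemma Hsup_pos b h p x : in11 x -> 0 < H b h p x -> Hsup b h p <> Finite 0.
Proof.
  intros Hx Hpos E. pose proof (Hsup_ge_val b h p x Hx). rewrite E in H. simpl in H. lra.
Qed.

Lemma pos_h b h p : (3 <= p)%nat -> 0 <= b -> h <> 0 -> exists x, in11 x /\ 0 < H b h p x.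
Proof.
  intros Hp Hb Hh.
  set (t := Rmin (1/2) (Rabs h / (2 * (1 + b)))).
  assert (Hah : 0 < Rabs h) by (apply Rabs_pos_lt; auto).
  assert (Ht0 : 0 < t) by (apply Rmin_pos; [lra| apply Rdiv_lt_0_compat; lra]).
  assert (Ht1 : t <= 1/2) by apply Rmin_l.
  assert (Ht2 : t <= Rabs h / (2 * (1 + b))) by apply Rmin_r.
  assert (Ht2' : (1 + b) * t <= Rabs h / 2).
  { apply (Rmult_le_compat_l (1 + b)) in Ht2; [|lra].
    replace ((1 + b) * (Rabs h / (2 * (1 + b)))) with (Rabs h / 2) in Ht2 by (field; lra). auto. }
  exists (if Rlt_dec 0 h then t else - t).
  set (x := if Rlt_dec 0 h then t else - t).
  assert (Hax : Rabs x = t) by (unfold x; destruct (Rlt_dec 0 h); [apply Rabs_right; lra| rewrite Rabs_Ropp; apply Rabs_right; lra]).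
  assert (Hhx : h * x = Rabs h * t).
  { unfold x. destruct (Rlt_dec 0 h).
    - rewrite Rabs_right; lra.
    - rewrite Rabs_left1; lra. }
  assert (Hx11 : -1 < x < 1) by (unfold x; destruct (Rlt_dec 0 h); lra).
  split; [unfold in11; lra|].
  unfold H. rewrite Hhx.
  pose proof (Ifun_le x Hx11).
  assert (Hx2 : x ^ 2 = t ^ 2) by (unfold x; destruct (Rlt_dec 0 h); ring).
  assert (Hxp : Rabs (x ^ p) <= t ^ 2).
  { rewrite <- RPow_abs, Hax. pose proof (pow_le_cube t p Hp ltac:(lra)). simpl in *. nra. }
  assert (- (t ^ 2) <= x ^ p) by (revert Hxp; unfold Rabs; destruct (Rcase_abs (x ^ p)); lra).
  assert (- b * t ^ 2 <= b * x ^ p) by nra.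
  simpl in *. nra.
Qed.

Lemma one_minus_pow t p : 0 <= t <= 1 -> 0 <= 1 - (1 - t) ^ p <= INR p * t.
Proof.
  intros Ht. induction p as [|p IH].
  - simpl. lra.
  - rewrite S_INR. simpl. pose proof (pow_le (1 - t) p ltac:(lra)).
    pose proof (pow_le1 (1 - t) p ltac:(lra)). nra.
Qed.

Lemma H_near1 b h p t : 0 < t <= 1/2 ->
  H b h p 1 - H b h p (1 - t) <= t * (Rabs b * INR p + Rabs h + /2 * ln t).
Proof.
  intros Ht. unfold H. rewrite Ifun1, pow1. unfold Ifun.
  replace (1 + (1 - t)) with (2 - t) by ring. replace (1 - (1 - t)) with t by ring.
  pose proof (one_minus_pow t p ltac:(lra)).
  assert (b * (1 - (1 - t) ^ p) <= Rabs b * (INR p * t)).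
  { apply Rle_trans with (Rabs b * (1 - (1 - t) ^ p)).
    - apply Rmult_le_compat_r; [lra| apply Rle_abs].
    - apply Rmult_le_compat_l; [apply Rabs_pos| lra]. }
  assert (h * t <= Rabs h * t) by (apply Rmult_le_compat_r; [lra| apply Rle_abs]).
  assert (0 <= ln (2 - t)) by (rewrite <- ln_1; apply ln_le; lra).
  assert (ln (2 - t) <= ln 2) by (apply ln_le; lra).
  assert ((2 - t) * ln (2 - t) <= 2 * ln 2) by nra.
  nra.
Qed.

Lemma H_opp b h p y : H b h p (- y) = H (b * (-1) ^ p) (- h) p y.
Proof.
  unfold H. rewrite Ifun_even. replace (- y) with ((-1) * y) by ring. rewrite Rpow_mult_distr. ring.
Qed.

Lemma not_lmax1 b h p : ~ (exists eps, 0 < eps /\ forall y, in11 y -> Rabs (y - 1) < eps -> H b h p y <= H b h p 1).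
Proof.
  intros [eps [He Hm]].
  set (K := Rabs b * INR p + Rabs h).
  assert (HK : 0 <= K) by (unfold K; pose proof (Rabs_pos b); pose proof (Rabs_pos h); pose proof (pos_INR p); nra).
  set (t := Rmin (eps / 2) (Rmin (1/2) (exp (- (2 * K + 2))))).
  assert (Ht0 : 0 < t) by (apply Rmin_pos; [lra| apply Rmin_pos; [lra| apply exp_pos]]).
  assert (Ht1 : t <= eps / 2) by apply Rmin_l.
  assert (Ht2 : t <= 1/2) by (eapply Rle_trans; [apply Rmin_r| apply Rmin_l]).
  assert (Ht3 : t <= exp (- (2 * K + 2))) by (eapply Rle_trans; [apply Rmin_r| apply Rmin_r]).
  assert (Hln : ln t <= - (2 * K + 2)) by (rewrite <- (ln_exp (- (2 * K + 2))); apply ln_le; auto).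
  pose proof (H_near1 b h p t ltac:(lra)) as Hn.
  assert (H b h p (1 - t) <= H b h p 1).
  { apply Hm; [unfold in11; lra|]. replace (1 - t - 1) with (- t) by ring. rewrite Rabs_Ropp, Rabs_right; lra. }
  fold K in Hn. assert (t * (K + / 2 * ln t) <= t * (-1)) by (apply Rmult_le_compat_l; lra). lra.
Qed.

Lemma part2 b h p x : local_max b h p x -> -1 < x < 1.
Proof.
  intros [Hx [eps [He Hm]]]. unfold in11 in Hx.
  destruct (Req_dec x 1) as [->|H1].
  { exfalso. apply (not_lmax1 b h p). exists eps; split; auto. }
  destruct (Req_dec x (-1)) as [->|H2]; [|lra].
  exfalso. apply (not_lmax1 (b * (-1) ^ p) (- h) p). exists eps; split; auto.
  intros y Hy Hye. rewrite <- !H_opp. replace (- (1)) with (-1) by ring. apply Hm.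
  - unfold in11 in *; lra.
  - replace (- y - -1) with (- (y - 1)) by ring. rewrite Rabs_Ropp; auto.
Qed.




Lemma H_le_c (p : nat) (c : R) (Hp : (3 <= p)%nat) (Hcx : forall x, 0 < x <= 1 -> c * x ^ p <= Ifun x) b x : 0 <= b <= c -> in11 x -> H b 0 p x <= 0.
Proof.
  intros Hb Hx. unfold in11 in Hx.
  destruct (Req_dec x 0) as [->|Hx0]; [rewrite Hat0; lia||lra|].
  unfold H. rewrite <- (Ifun_abs x).
  assert (Hax : 0 < Rabs x <= 1) by (split; [apply Rabs_pos_lt; auto| apply Rabs_le; lra]).
  pose proof (Hcx (Rabs x) Hax).
  assert (Hb1 : b * x ^ p <= b * Rabs (x ^ p)) by (apply Rmult_le_compat_l; [lra| apply Rle_abs]).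
  rewrite <- RPow_abs in Hb1.
  assert (0 <= Rabs x ^ p) by (apply pow_le; lra).
  assert (b * Rabs x ^ p <= c * Rabs x ^ p) by (apply Rmult_le_compat_r; lra).
  lra.
Qed.

Lemma Hsup0_iff (p : nat) (c m : R) (Hp : (3 <= p)%nat) (Hm : 1/2 <= m <= 1) (Hmc : Ifun m = c * m ^ p) (Hcx : forall x, 0 < x <= 1 -> c * x ^ p <= Ifun x) b : 0 <= b -> (Hsup b 0 p = Finite 0 <-> b <= c).
Proof.
  intros Hb. split.
  - intros E. destruct (Rle_dec b c) as [?|Hbc]; auto. exfalso.
    apply (Hsup_pos b 0 p m); auto.
    + unfold in11; lra.
    + unfold H. rewrite Hmc. assert (0 < m ^ p) by (apply pow_lt; lra). nra.
  - intros Hbc. apply (Hsup_eq b 0 p 0 0).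
    + intros x Hx. apply (H_le_c p c Hp Hcx); auto.
    + unfold in11; lra.
    + apply Hat0; lia.
Qed.

Lemma beta_tilde_eq (p : nat) (c m : R) (Hp : (3 <= p)%nat) (Hm : 1/2 <= m <= 1) (Hmc : Ifun m = c * m ^ p) (Hcx : forall x, 0 < x <= 1 -> c * x ^ p <= Ifun x) (Hc : 0 < c) : beta_tilde p = Finite c.
Proof.
  unfold beta_tilde. apply is_lub_Rbar_unique. split.
  - intros y [Hy E]. simpl. apply (Hsup0_iff p c m Hp Hm Hmc Hcx y Hy); auto.
  - intros l Hl. apply Hl. split; [lra|]. apply (Hsup0_iff p c m Hp Hm Hmc Hcx); lra.
Qed.

Lemma part1 (p : nat) (c m : R) (Hp : (3 <= p)%nat) (Hm : 1/2 <= m <= 1) (Hmc : Ifun m = c * m ^ p) (Hcx : forall x, 0 < x <= 1 -> c * x ^ p <= Ifun x) (Hc : 0 < c) b h : 0 <= b ->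
  (Rbar_le (Finite 0) (Hsup b h p) /\
   (Hsup b h p = Finite 0 <-> (Rbar_le (Finite b) (beta_tilde p) /\ h = 0))).
Proof.
  intros Hb. split.
  - rewrite <- (Hat0 b h p) by lia. apply Hsup_ge_val. unfold in11; lra.
  - rewrite (beta_tilde_eq p c m Hp Hm Hmc Hcx Hc). simpl. split.
    + intros E. destruct (Req_dec h 0) as [->|Hh].
      * split; auto. apply (Hsup0_iff p c m Hp Hm Hmc Hcx); auto.
      * exfalso. destruct (pos_h b h p Hp Hb Hh) as [x [Hx Hpos]].
        apply (Hsup_pos b h p x Hx Hpos E).
    + intros [Hbc ->]. apply (Hsup0_iff p c m Hp Hm Hmc Hcx); auto.
Qed.


Lemma lm_to_zeros b h q n l : 0 <= b -> NoDup l -> length l = S n ->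
  (forall x, In x l -> local_max b h (S (S (S q))) x) ->
  exists L, NoDup L /\ length L = (2 * n + 1)%nat /\ forall y, In y L -> fH b h q y = 0 /\
     (exists x, In x l /\ x <= y) /\ (exists x, In x l /\ y <= x).
Proof.
  intros Hb Hnd Hlen Hl.
  apply (lmax_count (H b h (S (S (S q)))) (fH b h q) (-1) 1).
  - intros y Hy; apply dH; auto.
  - apply (atmost_noplateau (fH b h q) (-1) 1 _ (fall b h q Hb)).
  - auto.
  - auto.
  - intros x Hx. pose proof (Hl x Hx) as Hlm. pose proof (part2 _ _ _ _ Hlm).
    destruct Hlm as [_ [eps [He Hm]]]. split; auto. exists eps; split; auto.
    intros y Hy. apply Hm. unfold in11; lra.
Qed.

Lemma lm_bounds (l : list R) lo hi y : (forall x, In x l -> lo < x < hi) ->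
  (exists x, In x l /\ x <= y) -> (exists x, In x l /\ y <= x) -> lo < y < hi.
Proof.
  intros Hl [x [Hx1 Hx2]] [x' [Hx'1 Hx'2]]. pose proof (Hl x Hx1). pose proof (Hl x' Hx'1). lra.
Qed.

Lemma count_lm b h q l : 0 <= b -> NoDup l -> (forall x, In x l -> local_max b h (S (S (S q))) x) ->
  (length l <= (if Nat.even q then 2 else 3))%nat.
Proof.
  intros Hb Hnd Hl. destruct l as [|x0 l0] eqn:El; [simpl; lia|]. rewrite <- El in *.
  destruct (lm_to_zeros b h q (length l0) l Hb Hnd ltac:(subst; reflexivity) Hl) as [L [HndL [HlenL HL]]].
  assert (Hin : forall x, In x l -> -1 < x < 1) by (intros x Hx; apply (part2 b h (S (S (S q)))); auto).
  pose proof (fall b h q Hb L HndL) as Hc.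
  assert (length L <= (if Nat.even q then 3 else 5))%nat.
  { apply Hc. intros y Hy. destruct (HL y Hy) as [Hz [Hb1 Hb2]]. split; auto.
    apply (lm_bounds l); auto. }
  subst l. simpl. destruct (Nat.even q); lia.
Qed.

Lemma gm_lm b h p x : global_max b h p x -> local_max b h p x.
Proof. intros [Hx Hm]. split; auto. exists 1; split; [lra|]. intros y Hy _; auto. Qed.

Lemma H_even_sym b h p x : Nat.Even p -> H b h p (- x) = H b h p x - 2 * h * x.
Proof.
  intros He. unfold H. rewrite Ifun_even. rewrite (pow_even_abs (- x) p He), (pow_even_abs x p He), Rabs_Ropp. ring.
Qed.

Lemma gm_sign b h p x : (3 <= p)%nat -> 0 <= b -> Nat.Even p -> h <> 0 -> global_max b h p x -> 0 < h * x.
Proof.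
  intros Hp Hb He Hh [Hx Hm].
  destruct (Req_dec x 0) as [->|Hx0].
  - exfalso. destruct (pos_h b h p Hp Hb Hh) as [z [Hz Hpos]].
    specialize (Hm z Hz). rewrite Hat0 in Hm by lia. lra.
  - destruct (Rlt_dec 0 (h * x)) as [?|Hn]; auto. exfalso.
    assert (h * x <> 0) by (intro E; apply Rmult_integral in E; destruct E; auto).
    specialize (Hm (- x) ltac:(unfold in11 in *; lra)). rewrite H_even_sym in Hm by auto. lra.
Qed.

Lemma three_abs x1 x2 x3 : x1 <> x2 -> x1 <> x3 -> x2 <> x3 ->
  Rabs x1 <> Rabs x2 \/ Rabs x1 <> Rabs x3.
Proof.
  intros H12 H13 H23.
  destruct (Req_dec (Rabs x1) (Rabs x2)) as [E1|E1]; [|left; auto].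
  destruct (Req_dec (Rabs x1) (Rabs x3)) as [E2|E2]; [|right; auto].
  exfalso. revert E1 E2. unfold Rabs.
  destruct (Rcase_abs x1); destruct (Rcase_abs x2); destruct (Rcase_abs x3); intros; lra.
Qed.

Lemma fH_0 b q : fH b 0 q 0 = 0.
Proof.
  unfold fH. replace (q + 2)%nat with (S (S q)) by lia. simpl.
  replace (1 + 0) with 1 by ring. replace (1 - 0) with 1 by ring. ring.
Qed.


Lemma even_q q : Nat.even q = false -> Nat.Even (S (S (S q))).
Proof.
  intros E. assert (Nat.Odd q) by (apply Nat.odd_spec; rewrite <- Nat.negb_even, E; reflexivity).
  destruct H as [r ->]. exists (r + 2)%nat. lia.
Qed.

Lemma even_p_q q : Nat.Even (S (S (S q))) -> Nat.even q = false.
Proof.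
  intros He. destruct (Nat.even q) eqn:E; auto. apply Nat.even_spec in E.
  destruct He as [r Hr]. destruct E as [s Hs]. lia.
Qed.

Theorem mainTheorem9 (p : nat) (hp : (3 <= p)%nat) (beta h : R) (hbeta : 0 <= beta) :
  (* (1) *)
  (Rbar_le (Finite 0) (Hsup beta h p) /\
   (Hsup beta h p = Finite 0 <->
      (Rbar_le (Finite beta) (beta_tilde p) /\ h = 0))) /\
  (* (2) *)
  (forall x, local_max beta h p x -> -1 < x < 1) /\
  (* (3) *)
  (forall l : list R, NoDup l -> (forall x, In x l -> local_max beta h p x) ->
     (length l <= (if Nat.eqb p 3 then 2 else 3))%nat) /\
  ((exists x1 x2 x3, x1 <> x2 /\ x1 <> x3 /\ x2 <> x3 /\
      global_max beta h p x1 /\ global_max beta h p x2 /\ global_max beta h p x3)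
   <-> ((4 <= p)%nat /\ Nat.Even p /\ h = 0 /\ Finite beta = beta_tilde p)).
Proof.
  destruct (c_exists p hp) as [c [m [Hm [Hmc [Hcx Hc]]]]].
  pose proof (beta_tilde_eq p c m hp Hm Hmc Hcx Hc) as Hbt.
  split; [apply (part1 p c m hp Hm Hmc Hcx Hc); auto|].
  split; [intros x Hx; apply (part2 beta h p x Hx)|].
  destruct p as [|[|[|q]]]; try lia.
  assert (Hcnt : forall l : list R, NoDup l -> (forall x, In x l -> local_max beta h (S (S (S q))) x) ->
     (length l <= (if Nat.eqb (S (S (S q))) 3 then 2 else 3))%nat).
  { intros l Hnd Hl. pose proof (count_lm beta h q l hbeta Hnd Hl).
    destruct q as [|q']; simpl; [simpl in H; lia|]. destruct (Nat.even (S q')); lia. }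
  split; [exact Hcnt|].
  set (p := S (S (S q))) in *.
  split.
  - intros [x1 [x2 [x3 [H12 [H13 [H23 [G1 [G2 G3]]]]]]]].
    assert (Hl3 : NoDup (x1 :: x2 :: x3 :: nil)).
    { apply NoDup_cons; [simpl; intros [E|[E|[]]]; congruence|].
      apply NoDup_cons; [simpl; intros [E|[]]; congruence|].
      apply NoDup_cons; [intros []|apply NoDup_nil]. }
    assert (Hlm3 : forall x, In x (x1 :: x2 :: x3 :: nil) -> local_max beta h p x).
    { intros x [E|[E|[E|[]]]]; subst x; apply gm_lm; first [exact G1|exact G2|exact G3]. }
    pose proof (count_lm beta h q _ hbeta Hl3 Hlm3) as Hc3. simpl in Hc3.
    assert (Eq : Nat.even q = false) by (destruct (Nat.even q); auto; lia).
    assert (Hev : Nat.Even p) by (apply even_q; auto).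
    assert (Hp4 : (4 <= p)%nat) by (unfold p; destruct q; [discriminate|lia]).
    assert (Hh : h = 0).
    { destruct (Req_dec h 0) as [?|Hh]; auto. exfalso.
      pose proof (gm_sign beta h p x1 hp hbeta Hev Hh G1).
      pose proof (gm_sign beta h p x2 hp hbeta Hev Hh G2).
      pose proof (gm_sign beta h p x3 hp hbeta Hev Hh G3).
      pose proof (part2 _ _ _ _ (gm_lm _ _ _ _ G1)).
      pose proof (part2 _ _ _ _ (gm_lm _ _ _ _ G2)).
      pose proof (part2 _ _ _ _ (gm_lm _ _ _ _ G3)).
      destruct (lm_to_zeros beta h q 2 _ hbeta Hl3 eq_refl Hlm3) as [L [HndL [HlenL HL]]].
      destruct (Rlt_dec 0 h) as [Hhp|Hhn].
      + assert (Hin : forall x, In x (x1 :: x2 :: x3 :: nil) -> 0 < x < 1).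
        { intros x [E|[E|[E|[]]]]; subst x; split; try lra; nra. }
        pose proof (fpos beta h q hbeta L HndL) as Hc'.
        assert (length L <= 3)%nat; [|lia].
        apply Hc'. intros y Hy. destruct (HL y Hy) as [Hz [Hb1 Hb2]].
        pose proof (lm_bounds _ 0 1 y Hin Hb1 Hb2). split; auto. split; lra.
      + assert (Hin : forall x, In x (x1 :: x2 :: x3 :: nil) -> -1 < x < 0).
        { intros x [E|[E|[E|[]]]]; subst x; split; try lra; nra. }
        pose proof (fneg beta h q hbeta L HndL) as Hc'.
        assert (length L <= 3)%nat; [|lia].
        apply Hc'. intros y Hy. destruct (HL y Hy) as [Hz [Hb1 Hb2]].
        pose proof (lm_bounds _ (-1) 0 y Hin Hb1 Hb2). split; auto. split; lra. }
    subst h.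
    split; [auto|]. split; [auto|]. split; [auto|]. rewrite Hbt. f_equal.
    assert (HM0 : forall x, global_max beta 0 p x -> H beta 0 p x = 0).
    { intros x Gx.
      assert (Hge : 0 <= H beta 0 p x).
      { destruct Gx as [_ Gx]. specialize (Gx 0 ltac:(unfold in11; lra)). rewrite Hat0 in Gx by lia. lra. }
      destruct (Rle_dec (H beta 0 p x) 0) as [?|Hpos]; [lra|]. exfalso.
      assert (Habs : forall y, global_max beta 0 p y -> global_max beta 0 p (Rabs y) /\ Rabs y <> 0).
      { intros y Gy. assert (Hy' : H beta 0 p (Rabs y) = H beta 0 p y).
        { unfold H. rewrite Ifun_abs, (pow_even_abs y p Hev). ring. }
        destruct Gy as [Hy Gy]. split.
        - split; [unfold in11 in *; apply Rabs_le in Hy; pose proof (Rabs_pos y); lra|].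
          intros z Hz. rewrite Hy'. auto.
        - intros E. apply Rabs_eq_0 in E. subst y.
          assert (Hq : H beta 0 p x <= H beta 0 p 0) by (apply Gy; destruct Gx; auto).
          rewrite Hat0 in Hq by lia. lra. }
      assert (Hval : forall y z, global_max beta 0 p y -> global_max beta 0 p z -> H beta 0 p y = H beta 0 p z).
      { intros y z [Hy Gy] [Hz Gz]. apply Rle_antisym; auto. }
      assert (Htwo : exists a b, 0 < a < b /\ global_max beta 0 p a /\ global_max beta 0 p b).
      { destruct (Habs x1 G1) as [A1 N1]. destruct (Habs x2 G2) as [A2 N2]. destruct (Habs x3 G3) as [A3 N3].
        pose proof (Rabs_pos x1). pose proof (Rabs_pos x2). pose proof (Rabs_pos x3).
        destruct (three_abs x1 x2 x3 H12 H13 H23) as [D|D].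
        - destruct (Rlt_dec (Rabs x1) (Rabs x2)).
          + exists (Rabs x1), (Rabs x2). split; [lra|auto].
          + exists (Rabs x2), (Rabs x1). split; [lra|auto].
        - destruct (Rlt_dec (Rabs x1) (Rabs x3)).
          + exists (Rabs x1), (Rabs x3). split; [lra|auto].
          + exists (Rabs x3), (Rabs x1). split; [lra|auto]. }
      destruct Htwo as [a [b [Hab [Ga Gb]]]].
      assert (Hl2 : NoDup (a :: b :: nil)).
      { apply NoDup_cons; [simpl; intros [E|[]]; lra|].
        apply NoDup_cons; [intros []|apply NoDup_nil]. }
      assert (Hlm2 : forall y, In y (a :: b :: nil) -> local_max beta 0 p y).
      { intros y [E|[E|[]]]; subst y; apply gm_lm; first [exact Ga|exact Gb]. }
      pose proof (part2 _ _ _ _ (gm_lm _ _ _ _ Gb)).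
      destruct (lm_to_zeros beta 0 q 1 _ hbeta Hl2 eq_refl Hlm2) as [L [HndL [HlenL HL]]].
      assert (Hin : forall y, In y (a :: b :: nil) -> 0 < y < 1).
      { intros y [E|[E|[]]]; subst y; lra. }
      assert (HLpos : forall y, In y L -> 0 < y < 1).
      { intros y Hy. destruct (HL y Hy) as [_ [Hb1 Hb2]]. apply (lm_bounds _ 0 1 y Hin Hb1 Hb2). }
      pose proof (fpos beta 0 q hbeta (0 :: L)) as Hc'.
      assert (length (0%R :: L) <= 3)%nat; [|simpl in *; lia].
      apply Hc'.
      - constructor; auto. intros HL0. specialize (HLpos 0 HL0). lra.
      - intros y [E|Hy].
        + subst y. split; [split; lra| apply fH_0].
        + specialize (HLpos y Hy). destruct (HL y Hy) as [Hz _]. split; auto. split; lra. }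
    assert (Hb : beta <= c).
    { apply (Hsup0_iff p c m hp Hm Hmc Hcx beta hbeta).
      apply (Hsup_eq beta 0 p 0 x1).
      - intros x Hx. pose proof (HM0 x1 G1) as E. destruct G1 as [_ G1]. specialize (G1 x Hx). lra.
      - destruct G1; auto.
      - apply HM0; auto. }
    assert (Hnz : exists x, global_max beta 0 p x /\ x <> 0).
    { destruct (Req_dec x1 0) as [E|E]; [exists x2; split; auto; intro; subst; auto| exists x1; auto]. }
    destruct Hnz as [x [Gx Hx0]].
    pose proof (HM0 x Gx) as Hx. unfold H in Hx.
    rewrite (pow_even_abs x p Hev) in Hx. rewrite <- (Ifun_abs x) in Hx.
    destruct Gx as [Hx11 _].
    assert (Hax : 0 < Rabs x <= 1) by (split; [apply Rabs_pos_lt; auto| apply Rabs_le; unfold in11 in *; lra]).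
    pose proof (Hcx (Rabs x) Hax).
    assert (0 < Rabs x ^ p) by (apply pow_lt; lra).
    assert (c <= beta) by nra. lra.
  - intros [Hp4 [Hev [Hh Hb]]]. subst h. rewrite Hbt in Hb. injection Hb as Hb. subst beta.
    assert (Hle : forall y, in11 y -> H c 0 p y <= 0) by (intros y Hy; apply (H_le_c p c hp Hcx); auto; lra).
    assert (Hmz : H c 0 p m = 0) by (unfold H; rewrite Hmc; ring).
    exists 0, m, (- m). split; [lra|]. split; [lra|]. split; [lra|].
    split; [|split].
    + split; [unfold in11; lra|]. intros y Hy. rewrite Hat0 by lia. auto.
    + split; [unfold in11; lra|]. intros y Hy. rewrite Hmz. auto.
    + split; [unfold in11; lra|]. intros y Hy. rewrite H_even_sym by auto. rewrite Hmz. specialize (Hle y Hy). lra.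
Qed.
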